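(* For every sufficiently small $\eta>0$ there exists $r>0$ such that, whenever $z_0\in\mathbb C$ satisfies $r/2<|z_0|<r$, the following hold. (a) For distinct pairs $(I,n),(I',n')\in\mathcal I$, the circles $\mathrm{im}(\gamma_{I,n})$ and $\mathrm{im}(\gamma_{I',n'})$ are disjoint. (b) For every $(I,n)\in\mathcal I$: - $a_i(z_0)\in B_{I,n}$ for all $i\in I$, and - $a_j(z_0)\notin B_{I,n}\cup\mathrm{im}(\gamma_{I,n})$ for all $j\notin I$.
   Context: Let $d\ge2$ and let $a_1,\dots,a_d\in\mathbb C[[x]]$ be distinct power series with positive radii of convergence. Let $e_{i,j}=v_x(a_i-a_j)$ be the $x$-adic valuation. Let $\mathcal I$ be the set of pairs $(I,n)$ such that: - $I\subseteq\{1,\dots,d\}$ has at least two elements, - $n\ge1$ is an integer, - $e_{i,j}\ge n$ for all distinct $i,j\in I$, and - $I$ is maximal among subsets with this property. For $n\ge1$ let $F_n:\mathbb C[[x]]\to\mathbb C[x]$ be the truncation $\sum_k c_kx^k\mapsto\sum_{k=0}^{n-1}c_kx^k$. For $(I,n)\in\mathcal I$ let $b_{I,n}$ be the common value of $F_n(a_i)$ for $i\in I$. Given $z_0$ and $\eta,r>0$, define: - $w_{I,n}=b_{I,n}(z_0)$; - the loop $\gamma_{I,n}(t)=w_{I,n}+r^{n-1}\eta e^{2\pi\sqrt{-1}t}$ for $t\in[0,1]$, with image the circle $\mathrm{im}(\gamma_{I,n})$; - the open disk $B_{I,n}=\{z\in\mathbb C: |z-w_{I,n}|<r^{n-1}\eta\}$.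 *)

(* Defs.v *)
From Stdlib Require Import Reals Lra ClassicalEpsilon.
Open Scope R_scope.

Definition Cplx : Type := (R * R)%type.
Definition C0 : Cplx := (0, 0).
Definition C1 : Cplx := (1, 0).
Definition Cadd (z w : Cplx) : Cplx := (fst z + fst w, snd z + snd w).
Definition Csub (z w : Cplx) : Cplx := (fst z - fst w, snd z - snd w).
Definition Cmul (z w : Cplx) : Cplx :=
  (fst z * fst w - snd z * snd w, fst z * snd w + snd z * fst w).
Fixpoint Cpow (z : Cplx) (k : nat) : Cplx :=
  match k with O => C1 | S k' => Cmul z (Cpow z k') end.
Definition Cnorm (z : Cplx) : R := sqrt (fst z * fst z + snd z * snd z).

(** Formal power series in Cplx[[x]]: coefficient sequences. *)
Definition pseries : Type := nat -> Cplx.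

Fixpoint Csum (u : nat -> Cplx) (N : nat) : Cplx :=
  match N with O => C0 | S N' => Cadd (Csum u N') (u N') end.

Definition Csums (u : nat -> Cplx) (l : Cplx) : Prop :=
  Un_cv (fun N => fst (Csum u N)) (fst l) /\ Un_cv (fun N => snd (Csum u N)) (snd l).

Definition ps_terms (f : pseries) (z : Cplx) : nat -> Cplx := fun k => Cmul (f k) (Cpow z k).

Definition pos_radius (f : pseries) : Prop :=
  exists rho, 0 < rho /\ forall z, Cnorm z < rho -> exists l, Csums (ps_terms f z) l.

(** Value f(z) of the power series at z (the sum of the series, when it converges). *)
Definition ps_eval (f : pseries) (z : Cplx) : Cplx :=
  epsilon (inhabits C0) (fun l => Csums (ps_terms f z) l).

(** v_x(f - g) >= n, i.e. all coefficients of f - g of degree < n vanish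
    (v_x(h) = min {k | h_k <> 0}). *)
Definition val_diff_ge (f g : pseries) (n : nat) : Prop :=
  forall k, (k < n)%nat -> Csub (f k) (g k) = C0.

(** Value at z of the truncation F_n(f) = sum_{k<n} c_k x^k. *)
Definition trunc_eval (f : pseries) (n : nat) (z : Cplx) : Cplx := Csum (ps_terms f z) n.

(** Indices are 0..d-1 (instead of 1..d); a subset I of {0..d-1} is a predicate. *)
Definition pairwise_close (d : nat) (a : nat -> pseries) (J : nat -> Prop) (n : nat) : Prop :=
  forall i j, J i -> J j -> i <> j -> val_diff_ge (a i) (a j) n.

Definition in_calI (d : nat) (a : nat -> pseries) (I : nat -> Prop) (n : nat) : Prop :=
  (forall i, I i -> (i < d)%nat) /\
  (exists i j, I i /\ I j /\ i <> j) /\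
  (1 <= n)%nat /\
  pairwise_close d a I n /\
  (forall J : nat -> Prop,
      (forall i, J i -> (i < d)%nat) ->
      (exists i j, J i /\ J j /\ i <> j) ->
      pairwise_close d a J n ->
      (forall i, I i -> J i) ->
      forall i, J i -> I i).

Definition same_pair (I : nat -> Prop) (n : nat) (I' : nat -> Prop) (n' : nat) : Prop :=
  n = n' /\ forall i, I i <-> I' i.

(* Main.v *)
Require Import Defs.
From Stdlib Require Import Reals Lra Lia Classical ClassicalEpsilon.
From Coquelicot Require Complex.
Open Scope R_scope.

Ltac cext := repeat match goal with x : Cplx |- _ => destruct x end;
  unfold Csub, Cadd, Cmul, Defs.C0, Defs.C1 in *; simpl in *; f_equal; ring.

Lemma Cnorm_Cmod z : Cnorm z = Complex.Cmod z.
Proof. unfold Cnorm, Complex.Cmod. f_equal. ring. Qed.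

Lemma Cnorm_ge0 z : 0 <= Cnorm z.
Proof. unfold Cnorm. apply sqrt_pos. Qed.

Lemma Cnorm_add z w : Cnorm (Cadd z w) <= Cnorm z + Cnorm w.
Proof. rewrite !Cnorm_Cmod. exact (Complex.Cmod_triangle z w). Qed.

Lemma Cnorm_mul z w : Cnorm (Cmul z w) = Cnorm z * Cnorm w.
Proof. rewrite !Cnorm_Cmod. exact (Complex.Cmod_mult z w). Qed.

Lemma Cnorm_C1 : Cnorm Defs.C1 = 1.
Proof. unfold Cnorm, Defs.C1; simpl. replace (1*1+0*0) with 1 by ring. apply sqrt_1. Qed.

Lemma Cnorm_pow z k : Cnorm (Cpow z k) = Cnorm z ^ k.
Proof. induction k; simpl. apply Cnorm_C1. rewrite Cnorm_mul, IHk; ring. Qed.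

Lemma Csub_tri x y z : Cnorm (Csub x z) <= Cnorm (Csub x y) + Cnorm (Csub y z).
Proof. replace (Csub x z) with (Cadd (Csub x y) (Csub y z)) by cext. apply Cnorm_add. Qed.

Lemma Cnorm_opp_sub x y : Cnorm (Csub x y) = Cnorm (Csub y x).
Proof. unfold Cnorm, Csub; simpl. f_equal. ring. Qed.

Lemma Rabs_le_sqrt x y : Rabs x <= sqrt (x*x + y*y).
Proof. rewrite <- sqrt_Rsqr_abs. apply sqrt_le_1_alt. unfold Rsqr. nra. Qed.

Lemma Cnorm_re z : Rabs (fst z) <= Cnorm z.
Proof. apply Rabs_le_sqrt. Qed.
Lemma Cnorm_im z : Rabs (snd z) <= Cnorm z.
Proof. unfold Cnorm. rewrite Rplus_comm. apply Rabs_le_sqrt. Qed.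

Lemma Cnorm_le_re_im z : Cnorm z <= Rabs (fst z) + Rabs (snd z).
Proof.
  unfold Cnorm. rewrite <- (sqrt_Rsqr (Rabs (fst z) + Rabs (snd z))).
  2:{ pose proof (Rabs_pos (fst z)); pose proof (Rabs_pos (snd z)); lra. }
  apply sqrt_le_1_alt. unfold Rsqr.
  pose proof (Rabs_pos (fst z)); pose proof (Rabs_pos (snd z)).
  assert (E1: fst z * fst z = Rabs (fst z) * Rabs (fst z)) by (rewrite <- Rabs_mult; symmetry; apply Rabs_pos_eq; nra).
  assert (E2: snd z * snd z = Rabs (snd z) * Rabs (snd z)) by (rewrite <- Rabs_mult; symmetry; apply Rabs_pos_eq; nra).
  rewrite E1, E2. nra.
Qed.

Lemma fin_max (Q : nat -> R -> Prop) d :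
  (forall i x y, Q i x -> x <= y -> Q i y) ->
  (forall i, (i < d)%nat -> exists x, Q i x) -> exists x, forall i, (i < d)%nat -> Q i x.
Proof.
  intros Hm. induction d as [|d IH]; intros H.
  - exists 0. intros; lia.
  - destruct IH as [x Hx]. { intros; apply H; lia. }
    destruct (H d) as [y Hy]; [lia|].
    exists (Rmax x y). intros i Hi. destruct (Nat.eq_dec i d).
    + subst. apply (Hm _ y). auto. apply Rmax_r.
    + apply (Hm _ x). apply Hx; lia. apply Rmax_l.
Qed.

Lemma fin_min_pos (Q : nat -> R -> Prop) d :
  (forall i x y, Q i x -> 0 < y <= x -> Q i y) ->
  (forall i, (i < d)%nat -> exists x, 0 < x /\ Q i x) -> exists x, 0 < x /\ forall i, (i < d)%nat -> Q i x.
Proof.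
  intros Hm. induction d as [|d IH]; intros H.
  - exists 1. split; [lra|]. intros; lia.
  - destruct IH as [x [x0 Hx]]. { intros; apply H; lia. }
    destruct (H d) as [y [y0 Hy]]; [lia|].
    exists (Rmin x y). split. { apply Rmin_glb_lt; auto. }
    intros i Hi. destruct (Nat.eq_dec i d).
    + subst. apply (Hm _ y). auto. split. apply Rmin_glb_lt; auto. apply Rmin_r.
    + apply (Hm _ x). apply Hx; lia. split. apply Rmin_glb_lt; auto. apply Rmin_l.
Qed.

Lemma fin_max_nat (Q : nat -> nat -> Prop) d :
  (forall i x y, Q i x -> (x <= y)%nat -> Q i y) ->
  (forall i, (i < d)%nat -> exists x, Q i x) -> exists x, forall i, (i < d)%nat -> Q i x.
Proof.
  intros Hm. induction d as [|d IH]; intros H.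
  - exists 0%nat. intros; lia.
  - destruct IH as [x Hx]. { intros; apply H; lia. }
    destruct (H d) as [y Hy]; [lia|].
    exists (Nat.max x y). intros i Hi. destruct (Nat.eq_dec i d).
    + subst. apply (Hm _ y). auto. lia.
    + apply (Hm _ x). apply Hx; lia. lia.
Qed.

Lemma lim_bound u l N c b :
  Un_cv u l -> (forall K, (N <= K)%nat -> Rabs (u K - c) <= b) -> Rabs (l - c) <= b.
Proof.
  intros Hu Hb. destruct (Rle_or_lt (Rabs (l - c)) b) as [h|h]; auto.
  destruct (Hu (Rabs (l - c) - b)) as [N0 HN0]; [lra|].
  specialize (HN0 (Nat.max N N0) ltac:(lia)). specialize (Hb (Nat.max N N0) ltac:(lia)).
  unfold R_dist in HN0.
  pose proof (Rabs_triang (l - u (Nat.max N N0)) (u (Nat.max N N0) - c)).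
  replace (l - u (Nat.max N N0) + (u (Nat.max N N0) - c)) with (l - c) in H by ring.
  rewrite Rabs_minus_sym in HN0. lra.
Qed.

Lemma least_nat (P : nat -> Prop) n :
  (exists k, (k < n)%nat /\ P k) -> exists m, (m < n)%nat /\ P m /\ forall k, (k < m)%nat -> ~ P k.
Proof.
  induction n as [|n IH]; intros [k [Hk Pk]]. lia.
  destruct (classic (exists k, (k < n)%nat /\ P k)) as [h|h].
  - destruct (IH h) as [m [? [? ?]]]. exists m. split; [lia|auto].
  - exists n. assert (k = n). { destruct (Nat.eq_dec k n); auto. exfalso; apply h. exists k; split; auto; lia. }
    subst. split; [lia|split; auto]. intros k' Hk' Pk'. apply h. eauto.
Qed.

Lemma Csum_ext u v N : (forall k, (k < N)%nat -> u k = v k) -> Csum u N = Csum v N.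
Proof. induction N; intros H; simpl; auto. rewrite IHN by (intros; apply H; lia). rewrite H by lia. auto. Qed.

Lemma trunc_ext f g N z : (forall k, (k < N)%nat -> f k = g k) -> trunc_eval f N z = trunc_eval g N z.
Proof. intros H. unfold trunc_eval. apply Csum_ext. intros k Hk. unfold ps_terms. rewrite H; auto. Qed.

Lemma Cnorm_sub_diag x : Cnorm (Csub x x) = 0.
Proof. unfold Cnorm, Csub; simpl. replace ((fst x - fst x) * (fst x - fst x) + (snd x - snd x) * (snd x - snd x)) with 0 by ring. apply sqrt_0. Qed.

Lemma Csum_diff_bound u p N B :
  (p <= N)%nat -> (forall k, (p <= k < N)%nat -> Cnorm (u k) <= B) ->
  Cnorm (Csub (Csum u N) (Csum u p)) <= INR (N - p) * B.
Proof.
  intros Hp Hb. induction N as [|N IH].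
  - assert (p = 0%nat) by lia. subst. rewrite Cnorm_sub_diag. simpl. lra.
  - destruct (Nat.eq_dec p (S N)).
    + subst. rewrite Nat.sub_diag, Cnorm_sub_diag. simpl. lra.
    + change (Csum u (S N)) with (Cadd (Csum u N) (u N)). replace (Csub (Cadd (Csum u N) (u N)) (Csum u p)) with (Cadd (Csub (Csum u N) (Csum u p)) (u N)) by cext.
      eapply Rle_trans. apply Cnorm_add.
      replace (S N - p)%nat with (S (N - p)) by lia. rewrite S_INR.
      pose proof (IH ltac:(lia) ltac:(intros; apply Hb; lia)). pose proof (Hb N ltac:(lia)). lra.
Qed.

Lemma pow_le_one' x n : 0 <= x <= 1 -> x ^ n <= 1.
Proof. intros Hx. induction n; simpl. lra. pose proof (pow_le x n (proj1 Hx)). nra. Qed.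

Lemma pow_le_mono_dec x p k : 0 <= x <= 1 -> (p <= k)%nat -> x ^ k <= x ^ p.
Proof.
  intros Hx Hk. replace k with (p + (k - p))%nat by lia. rewrite pow_add.
  pose proof (pow_le x p (proj1 Hx)). assert (x ^ (k - p) <= 1) by (apply pow_le_one'; lra).
  assert (0 <= x ^ (k-p)) by (apply pow_le; lra). nra.
Qed.

Lemma trunc_diff_bound f N p z A :
  (p <= N)%nat -> Cnorm z <= 1 -> (forall k, (p <= k < N)%nat -> Cnorm (f k) <= A) ->
  Cnorm (Csub (trunc_eval f N z) (trunc_eval f p z)) <= INR (N - p) * (A * Cnorm z ^ p).
Proof.
  intros Hp Hz Hb. unfold trunc_eval. apply Csum_diff_bound; auto.
  intros k Hk. unfold ps_terms. rewrite Cnorm_mul, Cnorm_pow.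
  pose proof (Cnorm_ge0 z). pose proof (Cnorm_ge0 (f k)).
  pose proof (pow_le_mono_dec (Cnorm z) p k ltac:(lra) ltac:(lia)).
  pose proof (pow_le (Cnorm z) k H). pose proof (Hb k Hk). nra.
Qed.

Lemma ps_eval_spec f z : (exists l, Csums (ps_terms f z) l) -> Csums (ps_terms f z) (ps_eval f z).
Proof. intros [l Hl]. unfold ps_eval. apply (epsilon_spec (inhabits Defs.C0) (fun l => Csums (ps_terms f z) l)). eauto. Qed.

Lemma tail_bound f : pos_radius f -> exists rho, 0 < rho /\ forall N, exists C, 0 <= C /\
  forall z, Cnorm z < rho -> Cnorm (Csub (ps_eval f z) (trunc_eval f N z)) <= C * Cnorm z ^ N.
Proof.
  intros [r0 [r0p Hc]].
  set (t := r0 / 2). assert (tp : 0 < t) by (unfold t; lra).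
  assert (Ht : Cnorm (t, 0) = t).
  { unfold Cnorm; simpl. replace (t * t + 0 * 0) with (t * t) by ring. apply sqrt_square. lra. }
  destruct (Hc (t, 0)) as [l1 [Hre Him]]. { rewrite Ht. unfold t; lra. }
  destruct (Hre 1 ltac:(lra)) as [N0 HN0]. destruct (Him 1 ltac:(lra)) as [N1 HN1].
  set (u := ps_terms f (t, 0)).
  assert (Hlarge : forall K, (Nat.max N0 N1 <= K)%nat -> Cnorm (u K) <= 4).
  { intros K HK. eapply Rle_trans. apply Cnorm_le_re_im.
    assert (E1 : fst (u K) = fst (Csum u (S K)) - fst (Csum u K)) by (simpl; ring).
    assert (E2 : snd (u K) = snd (Csum u (S K)) - snd (Csum u K)) by (simpl; ring).
    pose proof (HN0 (S K) ltac:(lia)). pose proof (HN0 K ltac:(lia)).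
    pose proof (HN1 (S K) ltac:(lia)). pose proof (HN1 K ltac:(lia)).
    unfold R_dist in *. fold u in H, H0, H1, H2.
    rewrite E1, E2.
    pose proof (Rabs_triang (fst (Csum u (S K)) - fst l1) (fst l1 - fst (Csum u K))).
    pose proof (Rabs_triang (snd (Csum u (S K)) - snd l1) (snd l1 - snd (Csum u K))).
    replace (fst (Csum u (S K)) - fst l1 + (fst l1 - fst (Csum u K))) with (fst (Csum u (S K)) - fst (Csum u K)) in H3 by ring.
    replace (snd (Csum u (S K)) - snd l1 + (snd l1 - snd (Csum u K))) with (snd (Csum u (S K)) - snd (Csum u K)) in H4 by ring.
    rewrite (Rabs_minus_sym (fst l1)) in H3. rewrite (Rabs_minus_sym (snd l1)) in H4. lra. }
  destruct (fin_max (fun K x => Cnorm (u K) <= x) (Nat.max N0 N1)) as [x Hx].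
  { intros; lra. } { intros i _. exists (Cnorm (u i)). lra. }
  set (B := Rmax x 4).
  assert (HB : forall K, Cnorm (f K) * t ^ K <= B).
  { intros K. replace (Cnorm (f K) * t ^ K) with (Cnorm (u K)).
    2:{ unfold u, ps_terms. rewrite Cnorm_mul, Cnorm_pow, Ht. auto. }
    destruct (Nat.lt_ge_cases K (Nat.max N0 N1)).
    - eapply Rle_trans. apply Hx; auto. apply Rmax_l.
    - eapply Rle_trans. apply Hlarge; auto. apply Rmax_r. }
  assert (B0 : 0 <= B) by (unfold B; pose proof (Rmax_r x 4); lra).
  exists (t / 2). split; [lra|]. intros N. exists (4 * B * (/ t) ^ N). split.
  { pose proof (pow_le (/t) N ltac:(left; apply Rinv_0_lt_compat; lra)). nra. }
  intros z Hz. set (q := Cnorm z * / t).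
  assert (q0 : 0 <= q). { unfold q. pose proof (Cnorm_ge0 z). pose proof (Rinv_0_lt_compat t tp). nra. }
  assert (q1 : q <= 1/2). { unfold q. apply (Rmult_le_reg_r t); auto. rewrite Rmult_assoc, Rinv_l by lra. lra. }
  assert (Hterm : forall k, Cnorm (ps_terms f z k) <= B * q ^ k).
  { intros k. unfold ps_terms. rewrite Cnorm_mul, Cnorm_pow.
    replace (Cnorm z) with (t * q) by (unfold q; field; lra). rewrite Rpow_mult_distr.
    pose proof (HB k). pose proof (pow_le q k q0). nra. }
  assert (Hpart : forall j, Cnorm (Csub (Csum (ps_terms f z) (N + j)) (Csum (ps_terms f z) N)) <= 2 * B * (q ^ N - q ^ (N + j))).
  { induction j.
    - rewrite Nat.add_0_r, Cnorm_sub_diag. lra.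
    - replace (N + S j)%nat with (S (N + j)) by lia.
      change (Csum (ps_terms f z) (S (N + j))) with (Cadd (Csum (ps_terms f z) (N + j)) (ps_terms f z (N + j))).
      replace (Csub (Cadd (Csum (ps_terms f z) (N + j)) (ps_terms f z (N + j))) (Csum (ps_terms f z) N))
        with (Cadd (Csub (Csum (ps_terms f z) (N + j)) (Csum (ps_terms f z) N)) (ps_terms f z (N + j))) by cext.
      eapply Rle_trans. apply Cnorm_add. pose proof (Hterm (N + j)%nat).
      simpl. pose proof (pow_le q (N + j) q0).
      assert (0 <= (1/2 - q) * (B * q ^ (N + j))) by (apply Rmult_le_pos; [lra| apply Rmult_le_pos; lra]). nra. }
  assert (Hpart' : forall K, (N <= K)%nat -> Cnorm (Csub (Csum (ps_terms f z) K) (Csum (ps_terms f z) N)) <= 2 * B * q ^ N).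
  { intros K HK. replace K with (N + (K - N))%nat by lia. eapply Rle_trans. apply Hpart.
    pose proof (pow_le q (N + (K - N)) q0).
    assert (0 <= B * q ^ (N + (K - N))) by (apply Rmult_le_pos; lra). lra. }
  destruct (ps_eval_spec f z) as [Cre Cim].
  { apply Hc. unfold t in Hz. lra. }
  assert (R1 : Rabs (fst (ps_eval f z) - fst (Csum (ps_terms f z) N)) <= 2 * B * q ^ N).
  { apply (lim_bound _ _ N _ _ Cre). intros K HK. eapply Rle_trans. 2: apply (Hpart' K HK).
    apply (Cnorm_re (Csub _ _)). }
  assert (R2 : Rabs (snd (ps_eval f z) - snd (Csum (ps_terms f z) N)) <= 2 * B * q ^ N).
  { apply (lim_bound _ _ N _ _ Cim). intros K HK. eapply Rle_trans. 2: apply (Hpart' K HK).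
    apply (Cnorm_im (Csub _ _)). }
  eapply Rle_trans. apply Cnorm_le_re_im. unfold trunc_eval. simpl.
  replace (4 * B * (/ t) ^ N * Cnorm z ^ N) with (4 * B * q ^ N).
  2:{ unfold q. rewrite Rpow_mult_distr. ring. }
  lra.
Qed.

Lemma Csub_C0_eq x y : Csub x y = Defs.C0 -> x = y.
Proof. destruct x, y. unfold Csub, Defs.C0; simpl. intros H; injection H; intros; f_equal; lra. Qed.

Lemma Csub_diag_C0 x : Csub x x = Defs.C0.
Proof. cext. Qed.

Lemma Cnorm_pos_neq x y : x <> y -> 0 < Cnorm (Csub x y).
Proof.
  intros H. unfold Cnorm. apply sqrt_lt_R0. destruct x as [x1 x2], y as [y1 y2]; simpl.
  destruct (Req_dec (x1 - y1) 0); destruct (Req_dec (x2 - y2) 0).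
  - exfalso; apply H; f_equal; lra.
  - assert (0 < (x2 - y2) * (x2 - y2)) by (apply Rsqr_pos_lt; auto). nra.
  - assert (0 < (x1 - y1) * (x1 - y1)) by (apply Rsqr_pos_lt; auto). nra.
  - assert (0 < (x1 - y1) * (x1 - y1)) by (apply Rsqr_pos_lt; auto). nra.
Qed.

Lemma trunc_S_sub f g m z : (forall k, (k < m)%nat -> f k = g k) ->
  Cnorm (Csub (trunc_eval f (S m) z) (trunc_eval g (S m) z)) = Cnorm (Csub (f m) (g m)) * Cnorm z ^ m.
Proof.
  intros H. unfold trunc_eval. change (Csum (ps_terms f z) (S m)) with (Cadd (Csum (ps_terms f z) m) (ps_terms f z m)).
  change (Csum (ps_terms g z) (S m)) with (Cadd (Csum (ps_terms g z) m) (ps_terms g z m)).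
  rewrite (Csum_ext (ps_terms f z) (ps_terms g z) m) by (intros k Hk; unfold ps_terms; rewrite H; auto).
  replace (Csub (Cadd (Csum (ps_terms g z) m) (ps_terms f z m)) (Cadd (Csum (ps_terms g z) m) (ps_terms g z m)))
    with (Cmul (Csub (f m) (g m)) (Cpow z m)) by (unfold ps_terms; cext).
  rewrite Cnorm_mul, Cnorm_pow. auto.
Qed.

Lemma sep_core u v si sj B L : Cnorm (Csub u si) <= B -> Cnorm (Csub v sj) <= B ->
  L <= Cnorm (Csub si sj) -> L - 2 * B <= Cnorm (Csub u v).
Proof.
  intros H1 H2 H3. pose proof (Csub_tri si u sj). pose proof (Csub_tri u v sj).
  rewrite (Cnorm_opp_sub si u) in H. lra.
Qed.

Section Comb.
Variable d : nat.
Variable a : nat -> pseries.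

Lemma calI_lt I n i : in_calI d a I n -> I i -> (i < d)%nat.
Proof. intros [H _] Hi. auto. Qed.

Lemma calI_agree I n i i' : in_calI d a I n -> I i -> I i' -> forall k, (k < n)%nat -> a i k = a i' k.
Proof.
  intros [_ [_ [_ [Hp _]]]] Hi Hi' k Hk. destruct (Nat.eq_dec i i'). subst; auto.
  apply Csub_C0_eq. apply (Hp i i'); auto.
Qed.

Lemma calI_sep I n i j : in_calI d a I n -> I i -> (j < d)%nat -> ~ I j -> exists k, (k < n)%nat /\ a i k <> a j k.
Proof.
  intros HI Hi Hj HnI. apply NNPP. intros Hc.
  assert (Hag : forall k, (k < n)%nat -> a i k = a j k).
  { intros k Hk. apply NNPP. intros Hne. apply Hc. eauto. }
  destruct HI as [Hlt [Htwo [Hn [Hp Hmax]]]].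
  apply HnI. apply (Hmax (fun x => I x \/ x = j)); auto.
  - intros x [Hx|Hx]; subst; auto.
  - destruct Htwo as [x [y [? [? ?]]]]. exists x, y. auto.
  - intros x y Hx Hy Hxy k Hk.
    assert (Hc2 : forall x, I x -> a x k = a i k).
    { intros x' Hx'. symmetry. apply (calI_agree I n); auto. repeat split; auto. }
    destruct Hx as [Hx|Hx]; destruct Hy as [Hy|Hy]; subst.
    + apply Hp; auto.
    + rewrite (Hc2 x Hx), Hag by auto. apply Csub_diag_C0.
    + rewrite (Hc2 y Hy), Hag by auto. apply Csub_diag_C0.
    + congruence.
Qed.

Lemma calI_eq I I' n i i' : in_calI d a I n -> in_calI d a I' n -> I i -> I' i' ->
  (forall k, (k < n)%nat -> a i k = a i' k) -> forall x, I x <-> I' x.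
Proof.
  intros HI HI' Hi Hi' Hag.
  assert (HJ : pairwise_close d a (fun x => I x \/ I' x) n).
  { intros x y Hx Hy Hxy k Hk.
    assert (Hv : forall x, I x \/ I' x -> a x k = a i k).
    { intros x' [Hx'|Hx']. symmetry; apply (calI_agree I n); auto.
      rewrite Hag by auto. symmetry; apply (calI_agree I' n); auto. }
    rewrite (Hv x Hx), (Hv y Hy). apply Csub_diag_C0. }
  assert (Hlt : forall x, I x \/ I' x -> (x < d)%nat).
  { intros x [H|H]; [apply (calI_lt I n)|apply (calI_lt I' n)]; auto. }
  destruct HI as [_ [Ht [_ [_ Hm]]]]. destruct HI' as [_ [Ht' [_ [_ Hm']]]].
  intros x; split; intros Hx.
  - apply (Hm' (fun x => I x \/ I' x)); auto.
    destruct Ht' as [p [q [? [? ?]]]]; exists p, q; auto.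
  - apply (Hm (fun x => I x \/ I' x)); auto.
    destruct Ht as [p [q [? [? ?]]]]; exists p, q; auto.
Qed.

Lemma calI_bound M I n : (forall i j, (i < d)%nat -> (j < d)%nat -> i <> j -> exists k, (k < M)%nat /\ a i k <> a j k) ->
  in_calI d a I n -> (1 <= n <= M)%nat.
Proof.
  intros HM HI. pose proof HI as HI0. destruct HI as [Hlt [[i [j [Hi [Hj Hij]]]] [Hn _]]].
  destruct (HM i j (Hlt i Hi) (Hlt j Hj) Hij) as [k [Hk Hne]].
  split; auto. destruct (Nat.le_gt_cases n k). lia.
  exfalso. apply Hne. apply (calI_agree I n); auto.
Qed.
End Comb.

Lemma le_div_mul x y c : 0 < c -> x <= y / c -> x * c <= y.
Proof. intros Hc H. apply (Rmult_le_compat_r c) in H; [|lra]. field_simplify in H; lra. Qed.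

Theorem mainTheorem3 (d : nat) (a : nat -> pseries)
  (hd : (2 <= d)%nat)
  (hdist : forall i j, (i < d)%nat -> (j < d)%nat -> i <> j -> exists k, a i k <> a j k)
  (hconv : forall i, (i < d)%nat -> pos_radius (a i)) :
  exists eta0, 0 < eta0 /\
  forall eta, 0 < eta < eta0 ->
  exists r, 0 < r /\
  forall z0 : Cplx, r / 2 < Cnorm z0 < r ->
    (forall I n I' n', in_calI d a I n -> in_calI d a I' n' -> ~ same_pair I n I' n' ->
       forall i i', I i -> I' i' ->
       ~ (exists z : Cplx,
            Cnorm (Csub z (trunc_eval (a i) n z0)) = r ^ (n - 1) * eta /\
            Cnorm (Csub z (trunc_eval (a i') n' z0)) = r ^ (n' - 1) * eta)) /\
    (forall I n, in_calI d a I n ->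
       forall i, I i ->
       (forall i', I i' ->
          Cnorm (Csub (ps_eval (a i') z0) (trunc_eval (a i) n z0)) < r ^ (n - 1) * eta) /\
       (forall j, (j < d)%nat -> ~ I j ->
          ~ (Cnorm (Csub (ps_eval (a j) z0) (trunc_eval (a i) n z0)) < r ^ (n - 1) * eta \/
             Cnorm (Csub (ps_eval (a j) z0) (trunc_eval (a i) n z0)) = r ^ (n - 1) * eta))).
Proof.
  destruct (fin_max_nat (fun i M => forall j, (j < d)%nat -> i <> j -> exists k, (k < M)%nat /\ a i k <> a j k) d)
    as [M HM0].
  { intros i x y H Hxy j Hj Hij. destruct (H j Hj Hij) as [k [? ?]]. exists k; split; auto; lia. }
  { intros i Hi. destruct (fin_max_nat (fun j M => i <> j -> exists k, (k < M)%nat /\ a i k <> a j k) d) as [M HM].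
    { intros j x y H Hxy Hij. destruct (H Hij) as [k [? ?]]. exists k; split; auto; lia. }
    { intros j Hj. destruct (Nat.eq_dec i j). exists 0%nat. intros; contradiction.
      destruct (hdist i j Hi Hj n) as [k Hk]. exists (S k). intros _. exists k; split; auto. }
    exists M. intros j Hj Hij. apply HM; auto. }
  assert (HM : forall i j, (i < d)%nat -> (j < d)%nat -> i <> j -> exists k, (k < M)%nat /\ a i k <> a j k)
    by (intros; apply HM0; auto).
  clear HM0.
  destruct (fin_max (fun i x => forall k, (k < M)%nat -> Cnorm (a i k) <= x) d) as [A0 HA0].
  { intros i x y H Hxy k Hk. specialize (H k Hk). lra. }
  { intros i Hi. apply (fin_max (fun k x => Cnorm (a i k) <= x) M). intros; lra. intros k _. exists (Cnorm (a i k)); lra. }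
  set (A := Rmax A0 0).
  assert (A0p : 0 <= A) by apply Rmax_r.
  assert (HA : forall i k, (i < d)%nat -> (k < M)%nat -> Cnorm (a i k) <= A).
  { intros i k Hi Hk. eapply Rle_trans. apply HA0; auto. apply Rmax_l. }
  clear HA0.
  destruct (fin_min_pos (fun i x => forall j k, (j < d)%nat -> (k < M)%nat -> a i k <> a j k -> x <= Cnorm (Csub (a i k) (a j k))) d)
    as [dl [dlp Hdl]].
  { intros i x y H Hxy j k Hj Hk Hne. specialize (H j k Hj Hk Hne). lra. }
  { intros i Hi.
    destruct (fin_min_pos (fun j x => forall k, (k < M)%nat -> a i k <> a j k -> x <= Cnorm (Csub (a i k) (a j k))) d)
      as [x [xp Hx]].
    { intros j x y H Hxy k Hk Hne. specialize (H k Hk Hne). lra. }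
    { intros j Hj. apply (fin_min_pos (fun k x => a i k <> a j k -> x <= Cnorm (Csub (a i k) (a j k))) M).
      { intros k x y H Hxy Hne. specialize (H Hne). lra. }
      intros k Hk. destruct (classic (a i k = a j k)) as [e|ne].
      - exists 1. split; [lra|]. intros; contradiction.
      - exists (Cnorm (Csub (a i k) (a j k))). split. apply Cnorm_pos_neq; auto. intros; lra. }
    exists x. split; auto. }
  destruct (fin_min_pos (fun i rho => forall N, exists C, 0 <= C /\ forall z, Cnorm z < rho ->
     Cnorm (Csub (ps_eval (a i) z) (trunc_eval (a i) N z)) <= C * Cnorm z ^ N) d) as [rho [rhop Hrho]].
  { intros i x y H Hxy N. destruct (H N) as [C [? HC]]. exists C. split; auto. intros z Hz. apply HC. lra. }
  { intros i Hi. apply tail_bound. apply hconv; auto. }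
  destruct (fin_max (fun i C => forall N, (N < S M)%nat -> forall z, Cnorm z < rho ->
     Cnorm (Csub (ps_eval (a i) z) (trunc_eval (a i) N z)) <= C * Cnorm z ^ N) d) as [C0 HC0].
  { intros i x y H Hxy N HN z Hz. eapply Rle_trans. apply H; auto.
    pose proof (pow_le _ N (Cnorm_ge0 z)). nra. }
  { intros i Hi. apply (fin_max (fun N C => forall z, Cnorm z < rho ->
     Cnorm (Csub (ps_eval (a i) z) (trunc_eval (a i) N z)) <= C * Cnorm z ^ N) (S M)).
    { intros N x y H Hxy z Hz. eapply Rle_trans. apply H; auto.
      pose proof (pow_le _ N (Cnorm_ge0 z)). nra. }
    intros N _. destruct (Hrho i Hi N) as [C [_ HC]]. exists C. auto. }
  set (C := Rmax C0 0).
  assert (Cp : 0 <= C) by apply Rmax_r.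
  assert (HC : forall i N z, (i < d)%nat -> (N <= M)%nat -> Cnorm z < rho ->
     Cnorm (Csub (ps_eval (a i) z) (trunc_eval (a i) N z)) <= C * Cnorm z ^ N).
  { intros i N z Hi HN Hz. eapply Rle_trans. apply HC0; auto. lia.
    pose proof (pow_le _ N (Cnorm_ge0 z)). pose proof (Rmax_l C0 0). fold C in H0. nra. }
  clear HC0 Hrho.
  set (E := C + INR M * A).
  assert (Ep : 0 <= E). { unfold E. pose proof (pos_INR M). nra. }
  exists (dl * (/ 2) ^ M / 4).
  assert (hp : 0 < (/2) ^ M) by (apply pow_lt; lra).
  split. { apply Rmult_lt_0_compat; [|lra]. apply Rmult_lt_0_compat; auto. }
  intros eta [etap etalt].
  set (r := Rmin (Rmin rho (1/4)) (Rmin (eta / (2 * E + 2)) (dl / (4 * E + 4)))).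
  assert (r1 : r <= rho) by (unfold r; eapply Rle_trans; [apply Rmin_l|apply Rmin_l]).
  assert (r2 : r <= 1/4) by (unfold r; eapply Rle_trans; [apply Rmin_l|apply Rmin_r]).
  assert (r3 : r * (2 * E + 2) <= eta).
  { apply le_div_mul; [lra|]. unfold r; eapply Rle_trans; [apply Rmin_r|apply Rmin_l]. }
  assert (r4 : r * (4 * E + 4) <= dl).
  { apply le_div_mul; [lra|]. unfold r; eapply Rle_trans; [apply Rmin_r|apply Rmin_r]. }
  assert (rp : 0 < r).
  { unfold r. repeat apply Rmin_glb_lt; try lra; apply Rdiv_lt_0_compat; lra. }
  exists r. split; auto.
  intros z0 [Zlo Zhi].
  set (Z := Cnorm z0) in *.
  assert (Z0 : 0 <= Z) by apply Cnorm_ge0.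
  assert (Zr : Z <= r) by lra.
  assert (Z1 : Z <= 1) by lra.
  assert (APT : forall i N m, (i < d)%nat -> (S m <= N)%nat -> (N <= M)%nat ->
     Cnorm (Csub (trunc_eval (a i) N z0) (trunc_eval (a i) (S m) z0)) <= E * Z ^ (S m)).
  { intros i N m Hi H1 H2. eapply Rle_trans. apply (trunc_diff_bound _ _ _ _ A); auto.
    intros k Hk. apply HA; auto; lia.
    assert (INR (N - S m) <= INR M) by (apply le_INR; lia).
    pose proof (pow_le Z (S m) Z0). fold Z. unfold E.
    assert (0 <= C * Z ^ S m) by (apply Rmult_le_pos; auto).
    assert (INR (N - S m) * (A * Z ^ S m) <= INR M * (A * Z ^ S m)) by (apply Rmult_le_compat_r; [apply Rmult_le_pos|]; auto).
    nra. }
  assert (APP : forall i m, (i < d)%nat -> (m < M)%nat ->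
     Cnorm (Csub (ps_eval (a i) z0) (trunc_eval (a i) (S m) z0)) <= E * Z ^ (S m)).
  { intros i m Hi Hm. eapply Rle_trans. apply HC; [auto|lia|fold Z; lra].
    pose proof (pow_le Z (S m) Z0). fold Z. unfold E.
    assert (0 <= INR M * A * Z ^ S m) by (apply Rmult_le_pos; [apply Rmult_le_pos; [apply pos_INR|]|]; auto).
    nra. }
  assert (KEY : forall i j m N u v, (i < d)%nat -> (j < d)%nat -> (m < N)%nat -> (N <= M)%nat ->
     (forall k, (k < m)%nat -> a i k = a j k) -> a i m <> a j m ->
     Cnorm (Csub u (trunc_eval (a i) (S m) z0)) <= E * Z ^ (S m) ->
     Cnorm (Csub v (trunc_eval (a j) (S m) z0)) <= E * Z ^ (S m) ->
     2 * eta * r ^ (N - 1) < Cnorm (Csub u v)).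
  { intros i j m N u v Hi Hj HmN HNM Hag Hne Hu Hv.
    pose proof (trunc_S_sub (a i) (a j) m z0 Hag) as Hmid. fold Z in Hmid.
    pose proof (Hdl i Hi j m Hj ltac:(lia) Hne) as Hd.
    pose proof (pow_le Z m Z0) as Zm0.
    assert (Hmid' : dl * Z ^ m <= Cnorm (Csub (trunc_eval (a i) (S m) z0) (trunc_eval (a j) (S m) z0))).
    { rewrite Hmid. apply Rmult_le_compat_r; auto. }
    pose proof (sep_core _ _ _ _ _ _ Hu Hv Hmid') as Hs.
    simpl in Hs.
    assert (HEZ : 2 * E * Z <= dl / 2).
    { assert (E * Z <= E * r) by (apply Rmult_le_compat_l; auto). nra. }
    assert (Hs2 : dl / 2 * Z ^ m <= Cnorm (Csub u v)).
    { assert (2 * E * Z * Z ^ m <= dl / 2 * Z ^ m) by (apply Rmult_le_compat_r; auto). nra. }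
    assert (Hzm : (r / 2) ^ m <= Z ^ m) by (apply pow_incr; lra).
    unfold Rdiv in Hzm. rewrite Rpow_mult_distr in Hzm.
    assert (Hrm : r ^ (N - 1) <= r ^ m) by (apply pow_le_mono_dec; [lra|lia]).
    assert (Hhm : (/ 2) ^ M <= (/ 2) ^ m) by (apply pow_le_mono_dec; [lra|lia]).
    assert (rN : 0 < r ^ (N - 1)) by (apply pow_lt; auto).
    assert (r ^ (N - 1) * (/ 2) ^ M <= r ^ m * (/ 2) ^ m).
    { apply Rmult_le_compat; try lra. }
    assert (r ^ (N - 1) * (/ 2) ^ M <= Z ^ m) by lra.
    assert (2 * eta * r ^ (N - 1) < 2 * (dl * (/ 2) ^ M / 4) * r ^ (N - 1)).
    { apply Rmult_lt_compat_r; auto. lra. }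
    assert (dl / 2 * (r ^ (N - 1) * (/ 2) ^ M) <= dl / 2 * Z ^ m) by (apply Rmult_le_compat_l; lra).
    nra. }
  assert (EZn : forall n, (1 <= n)%nat -> E * Z ^ n <= eta / 2 * r ^ (n - 1)).
  { intros n Hn. replace n with (S (n - 1)) at 1 by lia. simpl.
    assert (Z ^ (n - 1) <= r ^ (n - 1)) by (apply pow_incr; lra).
    pose proof (pow_le Z (n - 1) Z0).
    assert (Z * Z ^ (n - 1) <= r * r ^ (n - 1)) by (apply Rmult_le_compat; lra).
    assert (E * (Z * Z ^ (n - 1)) <= E * (r * r ^ (n - 1))) by (apply Rmult_le_compat_l; lra).
    assert (E * r <= eta / 2) by nra.
    pose proof (pow_le r (n - 1) ltac:(lra)).
    assert (E * r * r ^ (n - 1) <= eta / 2 * r ^ (n - 1)) by (apply Rmult_le_compat_r; lra).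
    nra. }
  assert (CLT : forall I n I' n' i i', in_calI d a I n -> in_calI d a I' n' -> (n < n')%nat -> I i -> I' i' ->
     forall z, Cnorm (Csub z (trunc_eval (a i) n z0)) = r ^ (n - 1) * eta ->
     Cnorm (Csub z (trunc_eval (a i') n' z0)) = r ^ (n' - 1) * eta -> False).
  { intros I n I' n' i i' HI HI' Hnn Hi Hi' z Hz1 Hz2.
    pose proof (calI_bound d a M I n HM HI). pose proof (calI_bound d a M I' n' HM HI').
    pose proof (calI_lt d a I n i HI Hi). pose proof (calI_lt d a I' n' i' HI' Hi').
    set (w := trunc_eval (a i) n z0) in *. set (w' := trunc_eval (a i') n' z0) in *.
    pose proof (Csub_tri z w' w) as T1. pose proof (Csub_tri w z w') as T2.
    rewrite (Cnorm_opp_sub w z) in T2.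
    assert (P1 : 0 < r ^ (n - 1)) by (apply pow_lt; lra).
    assert (P2 : r ^ (n' - 1) <= r * r ^ (n - 1)).
    { replace (r * r ^ (n - 1)) with (r ^ (S (n - 1))) by reflexivity. apply pow_le_mono_dec; [lra|lia]. }
    assert (P3 : r * r ^ (n - 1) <= 1/4 * r ^ (n - 1)) by (apply Rmult_le_compat_r; lra).
    destruct (classic (forall k, (k < n)%nat -> a i k = a i' k)) as [Hag|Hnag].
    - assert (Ew : w = trunc_eval (a i') n z0) by (apply trunc_ext; auto).
      assert (Hb : Cnorm (Csub w' w) <= eta / 2 * r ^ (n - 1)).
      { rewrite Ew. unfold w'. eapply Rle_trans. apply (trunc_diff_bound _ _ _ _ A); [lia|fold Z; lra|].
        intros k Hk. apply HA; auto; lia. fold Z.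
        assert (INR (n' - n) <= INR M) by (apply le_INR; lia).
        pose proof (pow_le Z n Z0).
        assert (INR (n' - n) * (A * Z ^ n) <= INR M * (A * Z ^ n)) by (apply Rmult_le_compat_r; [apply Rmult_le_pos|]; auto).
        pose proof (EZn n ltac:(lia)) as Hez. unfold E in Hez.
        assert (0 <= C * Z ^ n) by (apply Rmult_le_pos; auto).
        assert (INR M * (A * Z ^ n) + C * Z ^ n <= eta / 2 * r ^ (n - 1)) by (rewrite <- Hez; right; ring). lra. }
      nra.
    - assert (Hex : exists k, (k < n)%nat /\ a i k <> a i' k).
      { apply NNPP. intros Hc. apply Hnag. intros k Hk. apply NNPP. intros Hne. apply Hc. eauto. }
      destruct (least_nat _ n Hex) as [m [Hmn [Hne Hmin]]].
      assert (Hag : forall k, (k < m)%nat -> a i k = a i' k).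
      { intros k Hk. apply NNPP. intros Hne'. apply (Hmin k Hk). auto. }
      pose proof (KEY i i' m n w w' ltac:(auto) ltac:(auto) Hmn ltac:(lia) Hag Hne
        (APT i n m ltac:(auto) ltac:(lia) ltac:(lia)) (APT i' n' m ltac:(auto) ltac:(lia) ltac:(lia))).
      nra. }
  assert (CEQ : forall I n I' i i', in_calI d a I n -> in_calI d a I' n -> ~ (forall x, I x <-> I' x) -> I i -> I' i' ->
     forall z, Cnorm (Csub z (trunc_eval (a i) n z0)) = r ^ (n - 1) * eta ->
     Cnorm (Csub z (trunc_eval (a i') n z0)) = r ^ (n - 1) * eta -> False).
  { intros I n I' i i' HI HI' Hneq Hi Hi' z Hz1 Hz2.
    pose proof (calI_bound d a M I n HM HI).
    pose proof (calI_lt d a I n i HI Hi). pose proof (calI_lt d a I' n i' HI' Hi').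
    set (w := trunc_eval (a i) n z0) in *. set (w' := trunc_eval (a i') n z0) in *.
    pose proof (Csub_tri w z w') as T2.
    rewrite (Cnorm_opp_sub w z) in T2.
    assert (Hex : exists k, (k < n)%nat /\ a i k <> a i' k).
    { apply NNPP. intros Hc. apply Hneq. apply (calI_eq d a I I' n i i'); auto.
      intros k Hk. apply NNPP. intros Hne. apply Hc. eauto. }
    destruct (least_nat _ n Hex) as [m [Hmn [Hne Hmin]]].
    assert (Hag : forall k, (k < m)%nat -> a i k = a i' k).
    { intros k Hk. apply NNPP. intros Hne'. apply (Hmin k Hk). auto. }
    pose proof (KEY i i' m n w w' ltac:(auto) ltac:(auto) Hmn ltac:(lia) Hag Hne
      (APT i n m ltac:(auto) ltac:(lia) ltac:(lia)) (APT i' n m ltac:(auto) ltac:(lia) ltac:(lia))).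
    lra. }
  split.
  - intros I n I' n' HI HI' Hns i i' Hi Hi' [z [Hz1 Hz2]].
    destruct (Nat.lt_trichotomy n n') as [Hlt|[Heq|Hgt]].
    + exact (CLT I n I' n' i i' HI HI' Hlt Hi Hi' z Hz1 Hz2).
    + subst n'. refine (CEQ I n I' i i' HI HI' _ Hi Hi' z Hz1 Hz2).
      intros Hx. apply Hns. split; auto.
    + exact (CLT I' n' I n i' i HI' HI Hgt Hi' Hi z Hz2 Hz1).
  - intros I n HI i Hi.
    pose proof (calI_bound d a M I n HM HI).
    pose proof (calI_lt d a I n i HI Hi).
    assert (P1 : 0 < r ^ (n - 1)) by (apply pow_lt; lra).
    split.
    + intros i' Hi'. pose proof (calI_lt d a I n i' HI Hi').
      rewrite (trunc_ext (a i) (a i') n z0) by (apply (calI_agree d a I n); auto).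
      eapply Rle_lt_trans. apply HC; auto; try lia. fold Z; lra.
      fold Z. pose proof (EZn n ltac:(lia)).
      pose proof (pow_le Z n Z0).
      assert (C * Z ^ n <= E * Z ^ n) by (apply Rmult_le_compat_r; auto; unfold E; pose proof (pos_INR M); nra).
      nra.
    + intros j Hj HnI.
      destruct (calI_sep d a I n i j HI Hi Hj HnI) as [k Hk].
      destruct (least_nat (fun k => a j k <> a i k) n) as [m [Hmn [Hne Hmin]]].
      { exists k. split; [apply Hk|]. intros e; apply (proj2 Hk); auto. }
      assert (Hag : forall k, (k < m)%nat -> a j k = a i k).
      { intros k' Hk'. apply NNPP. intros Hne'. apply (Hmin k' Hk'). auto. }
      pose proof (KEY j i m n (ps_eval (a j) z0) (trunc_eval (a i) n z0) Hj ltac:(auto) Hmn ltac:(lia) Hag Hne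
        (APP j m Hj ltac:(lia)) (APT i n m ltac:(auto) ltac:(lia) ltac:(lia))).
      nra.
Qed.
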